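(* In the acoustic setting, suppose $A<0$ near $\rho_1\in(\rho_-,\rho_+)$, $B(\rho_1)>0$, and $A(\rho)+1=C(\rho)(\rho-\rho_1)^2$ near $\rho_1$ with $C(\rho)>0$ (a double root of $A=-1$). Then the circle $\rho=\rho_1$ is a horizon of the $(+)$ family (i.e. $\rho^+(t)\equiv\rho_1$ is a solution, with $d\varphi^+/dt=B(\rho_1)/\rho_1\neq 0$), and $d\rho^+/dt>0$ for all $\rho\neq\rho_1$ in a neighborhood of $\rho_1$; consequently $(+)$ trajectories starting slightly below $\rho_1$ satisfy $\rho^+(t)\to\rho_1$ as $t\to+\infty$, and those starting slightly above satisfy $\rho^+(t)\to\rho_1$ as $t\to-\infty$.
   Context: Acoustic metric in the plane with polar coordinates $(\rho,\varphi)$: Hamiltonian $H=(\tau+A\xi_\rho+B\xi_\varphi/\rho)^2-\xi_\rho^2-(\xi_\varphi/\rho)^2$, $A=A(\rho)$, $B=B(\rho)$ smooth. The ergoregion is the annulus $\rho_-<\rho<\rho_+$ where $A^2+B^2>1$. Zero-energy null geodesics are the null bicharacteristics with $\tau=0$ parametrized by $t$; the sign in $\xi_\rho=\frac{-AB\pm\sqrt{A^2+B^2-1}}{A^2-1}\,\xi_\varphi/\rho$ defines the $(\pm)$ family. With $s=\sqrt{A^2+B^2-1}$, the equations of motion in the ergoregion are $$\frac{d\rho^\pm}{dt}=\frac{A(A^2+B^2-1)\pm Bs}{A^2+B^2},\qquad \frac{d\varphi^\pm}{dt}=\frac{s\,(Bs\mp A)}{\rho\,(A^2+B^2)}.$$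 A horizon of the $(\pm)$ family is a circle $\{\rho=c\}$ in the ergoregion which is a closed trajectory of that family. *)

(* Defs.v *)
From Stdlib Require Import Reals Lra.
Open Scope R_scope.

Definition smooth_pos (f : R -> R) : Prop :=
  exists D : nat -> R -> R,
    (forall x, 0 < x -> D 0%nat x = f x) /\
    (forall (n : nat) (x : R), 0 < x -> derivable_pt_lim (D n) x (D (S n) x)).

Definition sfun (A B : R -> R) (rho : R) : R :=
  sqrt (A rho ^ 2 + B rho ^ 2 - 1).

Definition drho_plus (A B : R -> R) (rho : R) : R :=
  (A rho * (A rho ^ 2 + B rho ^ 2 - 1) + B rho * sfun A B rho)
  / (A rho ^ 2 + B rho ^ 2).

Definition dphi_plus (A B : R -> R) (rho : R) : R :=
  sfun A B rho * (B rho * sfun A B rho - A rho)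
  / (rho * (A rho ^ 2 + B rho ^ 2)).

Definition plus_trajectory (A B : R -> R) (I : R -> Prop) (r phi : R -> R) : Prop :=
  forall t, I t ->
    derivable_pt_lim r t (drho_plus A B (r t)) /\
    derivable_pt_lim phi t (dphi_plus A B (r t)).

(* A horizon of the (+) family: a circle {rho = c} in the ergoregion
   (rm, rp) which is a closed trajectory of the (+) family: the curve
   t |-> (c, phi t) solves the equations of motion for all t and comes back
   to its starting point after a positive time, having wound k <> 0 times. *)
Definition horizon_plus (A B : R -> R) (rm rp c : R) : Prop :=
  rm < c < rp /\
  exists phi : R -> R,
    plus_trajectory A B (fun _ => True) (fun _ => c) phi /\
    exists (T : R) (k : Z), 0 < T /\ k <> 0%Z /\
      phi T = phi 0 + 2 * PI * IZR k.

(* Main.v *)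
Require Import Defs.
From Stdlib Require Import Reals.
Open Scope R_scope.
From Stdlib Require Import Reals Lra Classical.
From Coquelicot Require Import Coquelicot.
Open Scope R_scope.

Lemma dpl_cont (f : R -> R) x l : derivable_pt_lim f x l -> continuity_pt f x.
Proof. intro H. apply derivable_continuous_pt. exists l. exact H. Qed.

Lemma cont_open (f : R -> R) x lo hi : continuity_pt f x -> lo < f x < hi ->
  exists eta, 0 < eta /\ forall y, Rabs (y - x) < eta -> lo < f y < hi.
Proof.
  intros Hc Hx.
  destruct (Hc (Rmin (f x - lo) (hi - f x))) as [al [Hal H]].
  { apply Rmin_case; lra. }
  exists al; split; auto. intros y Hy.
  destruct (Req_dec y x) as [->|Hne]; [lra|].
  assert (Hd := H y (conj (conj I (not_eq_sym Hne)) Hy)).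
  unfold R_dist in Hd. revert Hd.
  apply Rmin_case_strong; intros; apply Rabs_def2 in Hd; lra.
Qed.

Lemma mono_gen (r r' : R -> R) a b :
  a <= b -> (forall t, a <= t <= b -> derivable_pt_lim r t (r' t)) ->
  (forall t, a < t < b -> 0 <= r' t) -> r a <= r b.
Proof.
  intros Hab Hd Hp. destruct (Req_dec a b) as [->|Hne]; [lra|].
  destruct (MVT_cor2 r r' a b) as [x [Hx Hx2]]; [lra|exact Hd|].
  assert (0 <= r' x) by (apply Hp; lra). nra.
Qed.

Lemma w_deriv (r : R -> R) (c K t d : R) : derivable_pt_lim r t d ->
  derivable_pt_lim (fun t => (c - r t) * exp (K * t)) t
     (exp (K*t) * (K * (c - r t) - d)).
Proof.
  intro H. apply is_derive_Reals in H. apply is_derive_Reals.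
  assert (Hd : Derive r t = d) by (apply is_derive_unique; exact H).
  auto_derive.
  - exists d; exact H.
  - change (Derive (fun x : R => r x) t) with (Derive r t). rewrite Hd. ring.
Qed.

Lemma conv_up (G r : R->R) (c m K : R) :
 m < c -> 0 <= K ->
 (forall x, m < x < c -> 0 < G x) ->
 (forall x, m < x < c -> G x <= K*(c-x)) ->
 (forall x, m < x < c -> continuity_pt G x) ->
 (forall t, 0 <= t -> derivable_pt_lim r t (G (r t))) ->
 m < r 0 < c ->
 forall eps, 0 < eps -> exists T, forall t, T <= t -> Rabs (r t - c) < eps.
Proof.
  intros Hmc HK Gpos GK Gc Hr H0.
  assert (Inv : forall t1, 0 <= t1 -> m < r t1 < c).
  { intros t1 Ht1.
    set (E := fun t => 0 <= t <= t1 /\ forall s, 0 <= s <= t -> m < r s < c).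
    assert (E0 : E 0). { split; [lra|]. intros s Hs. replace s with 0 by lra. exact H0. }
    destruct (completeness E) as [ts [Hub Hlub]].
    { exists t1. intros t [Ht _]. lra. }
    { exists 0. exact E0. }
    assert (Hts0 : 0 <= ts) by (apply Hub; exact E0).
    assert (Hts1 : ts <= t1) by (apply Hlub; intros t [Ht _]; lra).
    assert (Hbel : forall s, 0 <= s < ts -> m < r s < c).
    { intros s Hs. destruct (classic (exists t, E t /\ s < t)) as [[t [[_ Et] Hst]]|Hn].
      - apply Et; lra.
      - exfalso. assert (ts <= s); [|lra]. apply Hlub. intros t Et.
        destruct (Rle_dec t s); auto. exfalso; apply Hn; exists t; split; auto; lra. }
    assert (Hgts : m < r ts < c).
    { split.
      - assert (r 0 <= r ts); [|lra].
        apply mono_gen with (fun t => G (r t)); [lra| intros; apply Hr; lra|].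
        intros t Ht. apply Rlt_le, Gpos, Hbel; lra.
      - assert (Hw : (c - r 0) * exp (K * 0) <= (c - r ts) * exp (K * ts)).
        { apply (mono_gen (fun t => (c - r t) * exp (K * t)) (fun t => exp (K*t) * (K * (c - r t) - G (r t))) 0 ts); [lra| |].
          - intros t Ht. apply w_deriv, Hr; lra.
          - intros t Ht. assert (Hg := Hbel t ltac:(lra)).
            assert (G (r t) <= K * (c - r t)) by (apply GK; exact Hg).
            assert (0 < exp (K*t)) by apply exp_pos. nra. }
        rewrite Rmult_0_r, exp_0 in Hw.
        assert (0 < exp (K*ts)) by apply exp_pos. nra. }
    destruct (Req_dec ts t1) as [<-|Hne]; [exact Hgts|].
    exfalso.
    destruct (cont_open r ts m c) as [eta [Heta Hn]]; [apply (dpl_cont _ _ _ (Hr ts Hts0)) | exact Hgts |].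
    set (t' := Rmin (ts + eta/2) t1).
    assert (Et' : E t').
    { assert (ts < t1) by lra. split. { unfold t'; split; [apply Rmin_case; lra | apply Rmin_r]. }
      intros s Hs. destruct (Rlt_dec s ts). { apply Hbel; lra. }
      apply Hn. assert (s <= ts + eta/2) by (eapply Rle_trans; [apply Hs| apply Rmin_l]).
      apply Rabs_def1; lra. }
    assert (t' <= ts) by (apply Hub; exact Et').
    revert H. unfold t'. apply Rmin_case; lra. }
  assert (Mono : forall a b, 0 <= a <= b -> r a <= r b).
  { intros a b Hab. apply mono_gen with (fun t => G (r t)); [lra | intros; apply Hr; lra|].
    intros t Ht. apply Rlt_le, Gpos, Inv; lra. }
  intros eps Heps.
  destruct (Rlt_dec (c - eps) (r 0)) as [Hlt|Hge].
  { exists 0. intros t Ht. assert (r 0 <= r t) by (apply Mono; lra).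
    assert (Hi := Inv t Ht). apply Rabs_def1; lra. }
  apply Rnot_lt_le in Hge. set (b := c - eps) in *. assert (Hb : b = c - eps) by reflexivity. clearbody b.
  assert (Hex : exists T, 0 <= T /\ b < r T).
  { apply NNPP. intro Hn.
    assert (Hall : forall t, 0 <= t -> r t <= b).
    { intros t Ht. destruct (Rle_dec (r t) b); auto. exfalso; apply Hn; exists t; split; auto; lra. }
    destruct (continuity_ab_min G (r 0) b) as [x0 [Hmin Hx0]]; [lra| intros; apply Gc; lra |].
    assert (Hg0 : 0 < G x0) by (apply Gpos; lra).
    set (t := (b - r 0 + 1) / G x0).
    assert (Ht : 0 < t) by (unfold t; apply Rdiv_lt_0_compat; lra).
    destruct (MVT_cor2 r (fun t => G (r t)) 0 t) as [x [Hx Hx2]]; [lra | intros; apply Hr; lra |].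
    assert (Hrx := Inv x ltac:(lra)). assert (Hrx' := Hall x ltac:(lra)).
    assert (Hrx0 : r 0 <= r x) by (apply Mono; lra).
    assert (G x0 <= G (r x)) by (apply Hmin; lra).
    assert (Hrt := Hall t ltac:(lra)).
    assert (G x0 * t = b - r 0 + 1) by (unfold t; field; lra).
    nra. }
  destruct Hex as [T [HT HbT]]. exists T. intros t Ht.
  assert (r T <= r t) by (apply Mono; lra). assert (Hi := Inv t ltac:(lra)).
  apply Rabs_def1; lra.
Qed.

Lemma smooth_der f : smooth_pos f -> forall x, 0 < x -> ex_derive f x.
Proof.
  intros [D [HD0 HD]] x Hx. exists (D 1%nat x).
  apply is_derive_ext_loc with (D 0%nat).
  - exists (mkposreal x Hx). intros y Hy. apply HD0.
    change (Rabs (y - x) < x) in Hy. apply Rabs_def2 in Hy. lra.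
  - apply is_derive_Reals, HD; exact Hx.
Qed.

Lemma F_der A B x : ex_derive A x -> ex_derive B x -> 1 < A x ^ 2 + B x ^ 2 ->
  ex_derive (drho_plus A B) x.
Proof.
  intros HA HB H. unfold drho_plus, sfun.
  auto_derive; repeat split; auto; lra.
Qed.

Lemma F_cont A B x : ex_derive (drho_plus A B) x -> continuity_pt (drho_plus A B) x.
Proof. intros [l Hl]. apply (dpl_cont _ _ l). apply is_derive_Reals; exact Hl. Qed.

Lemma pos_num a Bv s : 0 < a < 1 -> 0 < Bv -> 0 < s -> s ^ 2 = a^2 + Bv^2 - 1 ->
  0 < (-a) * (a^2 + Bv^2 - 1) + Bv * s.
Proof.
  intros Ha HB Hs Hs2.
  assert (Bv^2 - a^2 * s^2 > 0). { rewrite Hs2. assert (1 - a^2 > 0) by nra. assert (Bv^2+a^2 > 0) by nra. replace (Bv ^ 2 - a ^ 2 * (a ^ 2 + Bv ^ 2 - 1)) with ((1-a^2)*(Bv^2+a^2)) by ring. nra. }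
  assert (Bv - a * s > 0) by nra.
  rewrite <- Hs2. nra.
Qed.
Lemma refl_deriv (r : R -> R) (c t d : R) : derivable_pt_lim r (-t) d ->
  derivable_pt_lim (fun t => c - r (-t)) t d.
Proof.
  intro H. apply is_derive_Reals in H. apply is_derive_Reals.
  assert (Hd : Derive r (-t) = d) by (apply is_derive_unique; exact H).
  auto_derive.
  - exists d; exact H.
  - change (Derive (fun x : R => r x) (-t)) with (Derive r (-t)). rewrite Hd. ring.
Qed.

Theorem mainTheorem5
  (A B C : R -> R) (rm rp rho1 : R)
  (hA : smooth_pos A) (hB : smooth_pos B)
  (hrm : 0 <= rm) (hrmp : rm < rp)
  (hergo : forall rho, 0 < rho -> (rm < rho < rp <-> A rho ^ 2 + B rho ^ 2 > 1))
  (hrho1 : rm < rho1 < rp)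
  (hB1 : B rho1 > 0)
  (hnear : exists eps, 0 < eps /\
     forall rho, 0 < rho -> Rabs (rho - rho1) < eps ->
       A rho < 0 /\ C rho > 0 /\ A rho + 1 = C rho * (rho - rho1) ^ 2) :
  (* the circle rho = rho1 is a horizon of the (+) family *)
  horizon_plus A B rm rp rho1 /\
  (forall phi0 : R,
     plus_trajectory A B (fun _ => True) (fun _ => rho1)
       (fun t => phi0 + B rho1 / rho1 * t)) /\
  B rho1 / rho1 <> 0 /\
  (* d rho^+/dt > 0 near rho1, rho <> rho1 *)
  (exists delta, 0 < delta /\
     forall rho, 0 < Rabs (rho - rho1) < delta -> drho_plus A B rho > 0) /\
  (* trajectories starting slightly below converge to rho1 as t -> +oo *)
  (exists delta, 0 < delta /\
     forall r phi : R -> R,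
       plus_trajectory A B (fun t => 0 <= t) r phi ->
       rho1 - delta < r 0 < rho1 ->
       forall eps, 0 < eps -> exists T, forall t, T <= t -> Rabs (r t - rho1) < eps) /\
  (* trajectories starting slightly above converge to rho1 as t -> -oo *)
  (exists delta, 0 < delta /\
     forall r phi : R -> R,
       plus_trajectory A B (fun t => t <= 0) r phi ->
       rho1 < r 0 < rho1 + delta ->
       forall eps, 0 < eps -> exists T, forall t, t <= T -> Rabs (r t - rho1) < eps).
Proof.
  destruct hnear as [e0 [He0 Hn]].
  assert (Hr1 : 0 < rho1) by lra.
  assert (HA1 : A rho1 = -1).
  { destruct (Hn rho1 Hr1) as [_ [_ H]]. { rewrite Rminus_diag, Rabs_R0; lra. }
    rewrite Rminus_diag in H. simpl in H. lra. }
  assert (Hs1 : sfun A B rho1 = B rho1).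
  { unfold sfun. rewrite HA1. replace ((-1)^2 + B rho1 ^ 2 - 1) with (B rho1 ^ 2) by ring.
    apply sqrt_pow2; lra. }
  assert (HF1 : drho_plus A B rho1 = 0).
  { unfold drho_plus. rewrite Hs1, HA1. unfold Rdiv. ring. }
  assert (HP1 : dphi_plus A B rho1 = B rho1 / rho1).
  { unfold dphi_plus. rewrite Hs1, HA1. field. split; nra. }
  assert (Hdom : forall x, rm < x < rp -> ex_derive (drho_plus A B) x).
  { intros x Hx. assert (0 < x) by lra.
    apply F_der; try (apply smooth_der; auto). apply hergo; auto. }
  assert (Htraj : forall phi0, plus_trajectory A B (fun _ => True) (fun _ => rho1)
       (fun t => phi0 + B rho1 / rho1 * t)).
  { intros phi0 t _. split.
    - rewrite HF1. apply derivable_pt_lim_const.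
    - rewrite HP1. apply is_derive_Reals. auto_derive; auto. ring. }
  destruct (cont_open B rho1 0 (B rho1 + 1)) as [dB [HdB HBn]].
  { destruct (smooth_der B hB rho1 Hr1) as [l Hl]. apply (dpl_cont _ _ l), is_derive_Reals, Hl. }
  { lra. }
  destruct (Hdom rho1 hrho1) as [lF HlF]. apply is_derive_Reals in HlF.
  destruct (HlF 1 Rlt_0_1) as [dK HdK].
  set (K := Rabs lF + 1).
  assert (HK0 : 0 <= K) by (unfold K; assert (0 <= Rabs lF) by apply Rabs_pos; lra).
  set (d := Rmin (Rmin e0 (Rmin (rho1 - rm) (rp - rho1))) (Rmin dB dK)).
  assert (Hd0 : 0 < d).
  { unfold d. repeat apply Rmin_glb_lt; try lra. apply cond_pos. }
  assert (Hde0 : d <= e0) by (unfold d; eapply Rle_trans; [apply Rmin_l| apply Rmin_l]).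
  assert (Hdm : d <= rho1 - rm) by (unfold d; eapply Rle_trans; [apply Rmin_l| eapply Rle_trans; [apply Rmin_r|apply Rmin_l]]).
  assert (Hdp : d <= rp - rho1) by (unfold d; eapply Rle_trans; [apply Rmin_l| eapply Rle_trans; [apply Rmin_r|apply Rmin_r]]).
  assert (HdB' : d <= dB) by (unfold d; eapply Rle_trans; [apply Rmin_r| apply Rmin_l]).
  assert (HdK' : d <= dK) by (unfold d; eapply Rle_trans; [apply Rmin_r| apply Rmin_r]).
  clearbody d.
  assert (Hin : forall x, Rabs (x - rho1) < d -> rm < x < rp).
  { intros x Hx. apply Rabs_def2 in Hx. lra. }
  assert (Fpos : forall x, 0 < Rabs (x - rho1) < d -> drho_plus A B x > 0).
  { intros x [Hx1 Hx2]. assert (Hxr := Hin x Hx2). assert (0 < x) by lra.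
    destruct (Hn x ltac:(lra) ltac:(lra)) as [HAx [HCx HACx]].
    assert (HBx : 0 < B x) by (destruct (HBn x ltac:(lra)); lra).
    assert (HS : A x ^ 2 + B x ^ 2 > 1) by (apply hergo; auto).
    assert (Hsq : (x - rho1)^2 > 0).
    { assert (x - rho1 <> 0). { intro H0. rewrite H0, Rabs_R0 in Hx1. lra. } nra. }
    assert (HAm : -1 < A x) by nra.
    unfold drho_plus. apply Rdiv_lt_0_compat; [|nra].
    assert (Hs : 0 < sfun A B x) by (unfold sfun; apply sqrt_lt_R0; lra).
    assert (Hs2 : sfun A B x ^ 2 = (- A x)^2 + B x ^ 2 - 1) by (unfold sfun; rewrite pow2_sqrt; [ring | lra]).
    assert (Hp := pos_num (- A x) (B x) (sfun A B x) ltac:(lra) HBx Hs Hs2).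
    eapply Rlt_le_trans; [exact Hp| right; ring]. }
  assert (FK : forall x, Rabs (x - rho1) < d -> Rabs (drho_plus A B x) <= K * Rabs (x - rho1)).
  { intros x Hx. destruct (Req_dec x rho1) as [->|Hne].
    { rewrite HF1, Rminus_diag, !Rabs_R0. lra. }
    assert (Hh : x - rho1 <> 0) by lra.
    assert (H := HdK (x - rho1) Hh ltac:(lra)).
    replace (rho1 + (x - rho1)) with x in H by ring. rewrite HF1, Rminus_0_r in H.
    assert (Habs : 0 < Rabs (x - rho1)) by (apply Rabs_pos_lt; auto).
    assert (E : Rabs (drho_plus A B x) = Rabs (drho_plus A B x / (x - rho1)) * Rabs (x - rho1)).
    { rewrite <- Rabs_mult. f_equal. field. auto. }
    rewrite E. apply Rmult_le_compat_r; [lra|].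
    unfold K. assert (Htr := Rabs_triang_inv (drho_plus A B x / (x - rho1)) lF). lra. }
  split; [|split; [|split; [|split; [|split]]]].
  - split; [exact hrho1|]. exists (fun t => 0 + B rho1 / rho1 * t). split; [apply Htraj|].
    exists (2 * PI * rho1 / B rho1), 1%Z. split; [|split].
    + assert (PI > 0) by apply PI_RGT_0. apply Rdiv_lt_0_compat; nra.
    + discriminate.
    + simpl. field. split; lra.
  - exact Htraj.
  - apply Rmult_integral_contrapositive; split; [lra| apply Rinv_neq_0_compat; lra].
  - exists d. split; [exact Hd0|]. intros rho Hrho. apply Fpos; exact Hrho.
  - exists d. split; [exact Hd0|]. intros r phi Htr Hr0 eps Heps.
    apply (conv_up (drho_plus A B) r rho1 (rho1 - d) K); try lra.
    + intros x Hx. apply Fpos. rewrite Rabs_left; lra.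
    + intros x Hx. assert (H := FK x ltac:(rewrite Rabs_left; lra)).
      rewrite (Rabs_left (x - rho1)) in H by lra.
      assert (H2 := Rle_abs (drho_plus A B x)). lra.
    + intros x Hx. apply F_cont, Hdom, Hin. rewrite Rabs_left; lra.
    + intros t Ht. apply (Htr t Ht).
  - exists d. split; [exact Hd0|]. intros r phi Htr Hr0 eps Heps.
    set (u := fun t => 2 * rho1 - r (-t)).
    set (G := fun y => drho_plus A B (2 * rho1 - y)).
    destruct (conv_up G u rho1 (rho1 - d) K) with (eps := eps) as [T HT]; try lra.
    + intros x Hx. unfold G. apply Fpos. rewrite Rabs_right; lra.
    + intros x Hx. unfold G. assert (H := FK (2 * rho1 - x) ltac:(rewrite Rabs_right; lra)).
      rewrite (Rabs_right (2 * rho1 - x - rho1)) in H by lra.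
      assert (H2 := Rle_abs (drho_plus A B (2 * rho1 - x))). lra.
    + intros x Hx. unfold G.
      change (continuity_pt (comp (drho_plus A B) (fun y => 2*rho1 - y)) x).
      apply (continuity_pt_comp (fun y => 2*rho1 - y) (drho_plus A B) x).
      * apply (dpl_cont _ _ (-1)). apply is_derive_Reals. auto_derive; [exact I| cbn; lra].
      * apply F_cont, Hdom, Hin. rewrite Rabs_right; lra.
    + intros t Ht. unfold G, u.
      replace (2 * rho1 - (2 * rho1 - r (- t))) with (r (-t)) by ring.
      apply refl_deriv. apply (Htr (-t)). lra.
    + unfold u. replace (-0) with 0 by ring. lra.
    + exists (-T). intros t Ht. assert (H := HT (-t) ltac:(lra)). unfold u in H.
      replace (- - t) with t in H by ring.
      replace (r t - rho1) with (- (2 * rho1 - r t - rho1)) by ring. rewrite Rabs_Ropp. exact H.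
Qed.
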